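(* For every $n\ge1$ and $0\le m<n$, $$S_{n,m}(0121,0132)=S_{n,m}(0121,1032)=S_{n,m}(0122,0132)=S_{n,m}(0122,1032).$$
   Context: An ascent in a sequence $x_1\cdots x_k$ is an index $j$ with $x_j<x_{j+1}$; $\mathrm{asc}$ denotes the number of ascents. An ascent sequence of length $n$ is a sequence $x_1\cdots x_n$ of non-negative integers with $x_1=0$ and $x_i\le \mathrm{asc}(x_1\cdots x_{i-1})+1$ for $1<i\le n$. A sequence $\pi$ contains a pattern $\tau$ (a sequence of non-negative integers) if some subsequence of $\pi$ is order-isomorphic to $\tau$ (same relative order, equal letters to equal letters); otherwise it avoids $\tau$. $\mathcal{S}_{n,m}(T)$ is the set of ascent sequences of length $n$ with exactly $m$ ascents avoiding all patterns in $T$, and $S_{n,m}(T)$ its cardinality. *)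

(* Defs.v *)
From mathcomp Require Import all_boot.
Set Implicit Arguments. Unset Strict Implicit. Unset Printing Implicit Defensive.

Fixpoint asc (s : seq nat) : nat :=
  match s with
  | x :: ((y :: _) as t) => (x < y) + asc t
  | _ => 0
  end.

(* ascent sequence: x_1 = 0 and x_i <= asc(x_1..x_{i-1}) + 1 for 1 < i <= n
   (0-based: index i in 1..size-1, prefix take i s).  The empty sequence is not one. *)
Definition is_ascent_seq (s : seq nat) : bool :=
  (head 1 s == 0) &&
  all (fun i => nth 0 s i <= (asc (take i s)).+1) (iota 1 (size s).-1).

Definition order_iso (s t : seq nat) : bool :=
  (size s == size t) &&
  all (fun i => all (fun j =>
     ((nth 0 s i < nth 0 s j) == (nth 0 t i < nth 0 t j)) &&
     ((nth 0 s i == nth 0 s j) == (nth 0 t i == nth 0 t j)))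
     (iota 0 (size s))) (iota 0 (size s)).

Fixpoint bitseqs (k : nat) : seq bitseq :=
  if k is k'.+1 then [seq b :: m | b <- [:: true; false], m <- bitseqs k'] else [:: [::]].

Definition contains (pi tau : seq nat) : bool :=
  has (fun m => order_iso (mask m pi) tau) (bitseqs (size pi)).

Definition avoids (pi tau : seq nat) : bool := ~~ contains pi tau.

Fixpoint all_seqs (b n : nat) : seq (seq nat) :=
  if n is n'.+1 then [seq x :: s | x <- iota 0 b, s <- all_seqs b n'] else [:: [::]].

(* Every ascent sequence of length n has entries <= n - 1 < n,
   so all_seqs n n enumerates (without repetition) a superset of them. *)
Definition Snm_set (n m : nat) (T : seq (seq nat)) : seq (seq nat) :=
  [seq s <- all_seqs n n | is_ascent_seq s && (asc s == m) && all (avoids s) T].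

Definition Snm (n m : nat) (T : seq (seq nat)) : nat := size (Snm_set n m T).

(* Main.v *)
Require Import Defs.
From mathcomp Require Import all_boot.
From mathcomp Require Import zify.
Set Implicit Arguments. Unset Strict Implicit. Unset Printing Implicit Defensive.


Lemma mem_bitseqs k m : size m = k -> m \in bitseqs k.
Proof.
elim: k m => [|k IH] [|b m] // [Hm]. rewrite [bitseqs _]/=.
by case: b; rewrite !mem_cat map_f ?orbT ?IH.
Qed.

Lemma containsP pi tau :
  reflect (exists t, subseq t pi && order_iso t tau) (contains pi tau).
Proof.
apply: (iffP hasP) => [[m _ H]|[t /andP[/subseqP[m Hm ->] H]]].
  by exists (mask m pi); rewrite mask_subseq.
by exists m => //; apply: mem_bitseqs.
Qed.

Lemma mem_all_seqs b n s : (s \in all_seqs b n) = (size s == n) && all (fun x => x < b) s.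
Proof.
elim: n s => [|n IH] s; first by case: s.
apply/allpairsPdep/idP => [[y [t [Hy Ht ->]]]|].
  by rewrite /= eqSS; move: Ht; rewrite IH => /andP[-> ->]; rewrite andbT; rewrite mem_iota in Hy.
case: s => // x s /= /andP[Hs /andP[Hx Ha]].
exists x, s; split => //; first by rewrite mem_iota.
by rewrite IH -eqSS Hs.
Qed.

Lemma uniq_all_seqs b n : uniq (all_seqs b n).
Proof.
elim: n => [|n IH] //=.
apply: allpairs_uniq_dep => //; first exact: iota_uniq.
by move=> [x s] [y t] _ _ /= [-> ->].
Qed.


Lemma oisoP s t : order_iso s t -> size s = size t /\ forall i j, i < size s -> j < size s ->
  ((nth 0 s i < nth 0 s j) = (nth 0 t i < nth 0 t j)) /\
  ((nth 0 s i == nth 0 s j) = (nth 0 t i == nth 0 t j)).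
Proof.
case/andP => /eqP Hs /allP H; split => // i j Hi Hj.
have Hi' : i \in iota 0 (size s) by rewrite mem_iota.
have Hj' : j \in iota 0 (size s) by rewrite mem_iota.
by move: (H i Hi') => /allP /(_ j Hj') /andP[/eqP -> /eqP ->].
Qed.

Lemma eq_lt (x y : nat) : (x == y) = ~~ (x < y) && ~~ (y < x).
Proof. by case: ltngtP. Qed.

Lemma oiso_map f t : {in t &, forall x y, (f x < f y) = (x < y)} -> order_iso (map f t) t.
Proof.
move=> Hf; rewrite /order_iso size_map eqxx /=.
apply/allP => i; rewrite mem_iota add0n => Hi.
apply/allP => j; rewrite mem_iota add0n => Hj.
rewrite !(nth_map 0) // Hf ?mem_nth // eqxx /=.
have Hi' : nth 0 t i \in t by rewrite mem_nth.
have Hj' : nth 0 t j \in t by rewrite mem_nth.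
by rewrite eq_lt (eq_lt (nth 0 t i)) !Hf.
Qed.

Lemma size4 (t : seq nat) : size t = 4 -> exists a b c d, t = [:: a; b; c; d].
Proof. by case: t => [|a [|b [|c [|d [|]]]]] // _; exists a, b, c, d. Qed.

Ltac fin4 := move=> x y; rewrite !inE => /or4P[]/eqP-> /or4P[]/eqP-> /=; apply/idP/idP; lia.

Lemma c0121P s : reflect (exists a b c, [/\ a < b, b < c & subseq [:: a; b; c; b] s])
  (contains s [:: 0; 1; 2; 1]).
Proof.
apply: (iffP (containsP _ _)) => [[t /andP[Hs /oisoP[Ht H]]]|[a [b [c [H1 H2 Hs]]]]].
  have [a [b [c [d Et]]]] := size4 Ht; subst t.
  have [E1 _] := H 0 1 isT isT; have [E2 _] := H 1 2 isT isT.
  have [_ E3] := H 3 1 isT isT; have h1 : a < b by rewrite E1.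
  have h2 : b < c by rewrite E2.
  have /eqP h3 : d == b by rewrite E3.
  by subst d; exists a, b, c.
exists [:: a; b; c; b]; rewrite Hs /=.
have -> : [:: a; b; c; b] = map (nth 0 [:: a; b; c]) [:: 0; 1; 2; 1] by [].
apply: oiso_map; fin4.
Qed.

Lemma c0122P s : reflect (exists a b c, [/\ a < b, b < c & subseq [:: a; b; c; c] s])
  (contains s [:: 0; 1; 2; 2]).
Proof.
apply: (iffP (containsP _ _)) => [[t /andP[Hs /oisoP[Ht H]]]|[a [b [c [H1 H2 Hs]]]]].
  have [a [b [c [d Et]]]] := size4 Ht; subst t.
  have [E1 _] := H 0 1 isT isT; have [E2 _] := H 1 2 isT isT.
  have [_ E3] := H 3 2 isT isT.
  have h1 : a < b by rewrite E1.
  have h2 : b < c by rewrite E2.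
  have /eqP h3 : d == c by rewrite E3.
  by subst d; exists a, b, c.
exists [:: a; b; c; c]; rewrite Hs /=.
have -> : [:: a; b; c; c] = map (nth 0 [:: a; b; c]) [:: 0; 1; 2; 2] by [].
apply: oiso_map; fin4.
Qed.

Lemma c0132P s : reflect (exists a b c d, [/\ a < b, b < c, c < d & subseq [:: a; b; d; c] s])
  (contains s [:: 0; 1; 3; 2]).
Proof.
apply: (iffP (containsP _ _)) => [[t /andP[Hs /oisoP[Ht H]]]|[a [b [c [d [H1 H2 H3 Hs]]]]]].
  have [a [b [x [y Et]]]] := size4 Ht; subst t.
  have [E1 _] := H 0 1 isT isT; have [E2 _] := H 1 3 isT isT.
  have [E3 _] := H 3 2 isT isT.
  have h1 : a < b by rewrite E1.
  have h2 : b < y by rewrite E2.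
  have h3 : y < x by rewrite E3.
  by exists a, b, y, x.
exists [:: a; b; d; c]; rewrite Hs /=.
have -> : [:: a; b; d; c] = map (nth 0 [:: a; b; c; d]) [:: 0; 1; 3; 2] by [].
apply: oiso_map; fin4.
Qed.

Lemma c1032P s : reflect (exists a b c d, [/\ a < b, b < c, c < d & subseq [:: b; a; d; c] s])
  (contains s [:: 1; 0; 3; 2]).
Proof.
apply: (iffP (containsP _ _)) => [[t /andP[Hs /oisoP[Ht H]]]|[a [b [c [d [H1 H2 H3 Hs]]]]]].
  have [p [q [x [y Et]]]] := size4 Ht; subst t.
  have [E1 _] := H 1 0 isT isT; have [E2 _] := H 0 3 isT isT.
  have [E3 _] := H 3 2 isT isT.
  have h1 : q < p by rewrite E1.
  have h2 : p < y by rewrite E2.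
  have h3 : y < x by rewrite E3.
  by exists q, p, y, x.
exists [:: b; a; d; c]; rewrite Hs /=.
have -> : [:: b; a; d; c] = map (nth 0 [:: a; b; c; d]) [:: 1; 0; 3; 2] by [].
apply: oiso_map; fin4.
Qed.


Lemma asc_cons2 x y t : asc (x :: y :: t) = (x < y) + asc (y :: t).
Proof. by []. Qed.

Lemma asc_rcons y t x : asc (rcons (y :: t) x) = asc (y :: t) + (last y t < x).
Proof.
elim: t y => [|z t IH] y /=; first by rewrite addn0 add0n.
by rewrite -/(rcons (z :: t) x) -!/(asc (z :: _)) IH; case: t IH => [|w t] IH //=; rewrite addnA.
Qed.

Lemma asc_size t : asc t <= (size t).-1.
Proof.
elim: t => [|x [|y t] IH] //=.
by move: IH; rewrite /= => IH; case: (x < y) => /=; lia.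
Qed.

Lemma asc_cat u v : asc u <= asc (u ++ v).
Proof.
elim: u => [|x [|y u] IH] //=.
by move: IH; rewrite /= => IH; lia.
Qed.

Lemma asc_rcons_ge t x : asc t <= asc (rcons t x).
Proof. by rewrite -cats1 asc_cat. Qed.

Lemma is_asc1 x : is_ascent_seq [:: x] = (x == 0).
Proof. by rewrite /is_ascent_seq /= andbT. Qed.

Lemma is_asc_rcons t x : t != [::] ->
  is_ascent_seq (rcons t x) = is_ascent_seq t && (x <= (asc t).+1).
Proof.
move=> Ht; rewrite /is_ascent_seq size_rcons.
have -> : head 1 (rcons t x) = head 1 t by case: t Ht.
rewrite -andbA; congr (_ && _).
case: t Ht => // y t _.
rewrite [size _]/= [_.+1.-1]/=.
have -> : iota 1 (size t).+1 = rcons (iota 1 (size t)) (size t).+1.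
  by rewrite -[(size t).+1]addn1 iotaD cats1 add1n addn1.
rewrite all_rcons andbC [_.+1.-1]/=; congr (_ && _); last first.
  rewrite -cats1 nth_cat [size (y :: t)]/= ltnn subnn.
  by rewrite -[(size t).+1]/(size (y :: t)) take_size_cat.
apply: eq_in_all => i; rewrite mem_iota add1n => /andP[Hi1 Hi2].
have Hi : i <= size (y :: t) by apply: ltnW.
by rewrite -cats1 nth_cat Hi2 takel_cat.
Qed.

Lemma is_asc_nil : is_ascent_seq [::] = false.
Proof. by []. Qed.

Lemma is_asc_prefix u v : is_ascent_seq (u ++ v) -> u != [::] -> is_ascent_seq u.
Proof.
elim/last_ind: v => [|v x IH]; first by rewrite cats0.
move=> H Hu; apply: IH => //.
move: H; rewrite -rcons_cat is_asc_rcons; first by case/andP.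
by case: u Hu.
Qed.

Lemma is_asc_head s : is_ascent_seq s -> exists s', s = 0 :: s'.
Proof. by case: s => // x s /andP[/eqP /= -> _]; exists s. Qed.

Lemma is_asc_at u e v : is_ascent_seq (u ++ e :: v) -> u != [::] -> e <= (asc u).+1.
Proof.
move=> H Hu; have := is_asc_prefix (u := rcons u e) (v := v).
rewrite cat_rcons => /(_ H).
have Hr : rcons u e != [::] by case: (u).
by move=> /(_ Hr); rewrite is_asc_rcons // => /andP[].
Qed.

Lemma is_asc_bound s : is_ascent_seq s -> all (fun x => x <= (asc s).+1) s.
Proof.
elim/last_ind: s => [|t x IH] //.
case: (altP (t =P [::])) => [->|Ht]; first by rewrite is_asc1 /= => /eqP ->.
rewrite is_asc_rcons // => /andP[Ht1 Hx].
rewrite all_rcons (leq_trans Hx) ?ltnS ?asc_rcons_ge //=.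
apply/allP => y Hy; have := allP (IH Ht1) y Hy => Hy'.
apply: (leq_trans Hy'); by rewrite ltnS asc_rcons_ge.
Qed.

Lemma is_asc_lt_size s : is_ascent_seq s -> all (fun x => x < size s) s.
Proof.
elim/last_ind: s => [|t x IH] //.
case: (altP (t =P [::])) => [->|Ht]; first by rewrite is_asc1 /= => /eqP ->.
rewrite is_asc_rcons // => /andP[Ht1 Hx].
rewrite all_rcons size_rcons; apply/andP; split.
  have := asc_size t; clear IH; case: t Ht Ht1 Hx => // y t _ _; rewrite [size _]/= [_.+1.-1]/=.
  move: (asc _) => k H1 H2; lia.
apply/allP => y Hy; have := allP (IH Ht1) y Hy => Hy'; lia.
Qed.


Lemma subseq_cons_split (x : nat) u s : subseq (x :: u) s ->
  exists s1 s2, s = s1 ++ x :: s2 /\ subseq u s2.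
Proof.
elim: s => [|y s IH] //=.
case: eqP => [<- H|_ /IH [s1 [s2 [-> H]]]]; first by exists [::], s.
by exists (y :: s1), s2.
Qed.

Lemma asc_all0 t : all (fun x => x == 0) t -> asc t = 0.
Proof.
elim: t => [|x t IH] //; case: t IH => [|y t] IH // /andP[/eqP -> H].
rewrite asc_cons2 IH //; by case/andP: H => /eqP ->.
Qed.

Lemma asc_all0_rev t : is_ascent_seq t -> 1 \notin t -> all (fun x => x == 0) t.
Proof.
elim/last_ind: t => [|t x IH] //.
case: (altP (t =P [::])) => [->|Ht]; first by rewrite is_asc1 /= => /eqP ->.
rewrite is_asc_rcons // => /andP[Ht1 Hx]; rewrite mem_rcons inE negb_or => /andP[Hx1 Ht2].
have H0 := IH Ht1 Ht2; rewrite all_rcons H0 andbT.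
move: Hx; rewrite asc_all0 //; move: Hx1; case: x => [|[|]] //.
Qed.

Lemma one_in t : is_ascent_seq t -> 0 < asc t -> 1 \in t.
Proof.
move=> H1 H2; apply/negPn/negP => H3.
by move: H2; rewrite asc_all0 // asc_all0_rev.
Qed.

Lemma L1 s d u : is_ascent_seq s -> subseq (d :: u) s -> 1 < d ->
  subseq (0 :: 1 :: d :: u) s.
Proof.
move=> Hs /subseq_cons_split [s1 [s2 [Es Hu]]] Hd; subst s.
have Hs1 : s1 != [::].
  by case: s1 Hs => //= /is_asc_head [s' [E _]]; move: Hd; rewrite E.
have Hb := is_asc_at Hs Hs1.
have Ha := is_asc_prefix Hs Hs1.
have H1 : 1 \in s1 by apply: one_in => //; lia.
have [s1' E1] := is_asc_head Ha; subst s1.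
rewrite -[0 :: 1 :: d :: u]/([:: 0; 1] ++ d :: u); apply: cat_subseq.
  by rewrite /= sub1seq; move: H1; rewrite inE.
by rewrite /= ?eqxx.
Qed.

Lemma sorted_pair (r : rel nat) t x y : transitive r -> sorted r t -> subseq [:: x; y] t -> r x y.
Proof.
move=> Htr; rewrite sorted_pairwise //.
elim: t => [|z t IH] //= /andP[Ha Hp].
case: eqP => [Exz|_]; last exact: IH.
subst; rewrite sub1seq; exact: (allP Ha).
Qed.

Lemma unsorted_pair (r : rel nat) t : ~~ sorted r t -> exists x y, subseq [:: x; y] t /\ ~~ r x y.
Proof.
elim: t => [|x t IH] //; case: t IH => [|y t] IH //.
rewrite [sorted _ _]/=; case: (boolP (r x y)) => Hxy H.
  have [a [b [Hs Hr]]] := IH H; exists a, b; split => //.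
  exact: (subseq_trans Hs (subseq_cons _ _)).
by exists x, y; rewrite /= !eqxx /= sub0seq.
Qed.

Definition F1 s := [seq x <- s | 0 < x].
Definition F2 s := [seq x <- s | 1 < x].

Lemma sub_pair x y (p : pred nat) s : p x -> p y -> subseq [:: x; y] [seq z <- s | p z] = subseq [:: x; y] s.
Proof. by move=> Hx Hy; rewrite subseq_filter /= Hx Hy. Qed.

Lemma K0132 s : is_ascent_seq s -> avoids s [:: 0; 1; 3; 2] = sorted leq (F2 s).
Proof.
move=> Hs; apply/idP/idP => [Ha|Hso].
  apply/negPn/negP => /unsorted_pair [x [y [Hsub Hr]]].
  move: Hsub; rewrite /F2 subseq_filter /= andbT => /andP[/andP[Hx1 Hy] Hsub].
  have := L1 Hs Hsub Hx1.
  move=> H; move/negP: Ha; apply; apply/c0132P; exists 0, 1, y, x; split => //; lia.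
apply/negP => /c0132P [a [b [c [d [H1 H2 H3 Hsub]]]]].
have Hdc : subseq [:: d; c] s := subseq_trans (drop_subseq [:: a; b; d; c] 2) Hsub.
have := sorted_pair (x:=d) (y:=c) leq_trans Hso; rewrite /F2 sub_pair ?Hdc; try lia.
Qed.

Lemma K0122 s : is_ascent_seq s ->
  avoids s [:: 0; 1; 2; 2] && avoids s [:: 0; 1; 3; 2] = sorted ltn (F2 s).
Proof.
move=> Hs; rewrite K0132 //; apply/idP/idP => [/andP[Ha Hso]|Hso].
  apply/negPn/negP => /unsorted_pair [x [y [Hsub Hr]]].
  have Hxy := sorted_pair leq_trans Hso Hsub.
  have Exy : x = y by lia.
  subst y.
  move: Hsub; rewrite /F2 subseq_filter /= andbT => /andP[/andP[Hx1 _] Hsub].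
  have := L1 Hs Hsub Hx1 => H.
  move/negP: Ha; apply; apply/c0122P; exists 0, 1, x; split => //; lia.
rewrite (sub_sorted _ Hso) ?andbT; last by move=> x y /ltnW.
apply/negP => /c0122P [a [b [c [H1 H2 Hsub]]]].
have Hdc : subseq [:: c; c] s := subseq_trans (drop_subseq [:: a; b; c; c] 2) Hsub.
have := sorted_pair (x:=c) (y:=c) ltn_trans Hso; rewrite /F2 sub_pair ?Hdc ?ltnn //; lia.
Qed.

Lemma F2F1 s : F2 s = [seq x <- F1 s | 1 < x].
Proof. rewrite /F1 /F2 -filter_predI; apply: eq_filter => x /=; by case: x => [|[|]]. Qed.

Lemma K0121 s : is_ascent_seq s ->
  avoids s [:: 0; 1; 2; 1] && avoids s [:: 0; 1; 3; 2] = sorted leq (F1 s).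
Proof.
move=> Hs; rewrite K0132 //; apply/idP/idP => [/andP[Ha Hso]|Hso].
  apply/negPn/negP => /unsorted_pair [x [y [Hsub Hr]]].
  move: Hsub; rewrite /F1 subseq_filter /= andbT => /andP[/andP[Hx1 Hy1] Hsub].
  case: (ltnP 1 y) => Hy2.
    have := sorted_pair (x:=x) (y:=y) leq_trans Hso; rewrite /F2 sub_pair ?Hsub //; lia.
  have Ey : y = 1 by lia.
  subst y.
  have Hx2 : 1 < x by lia.
  have := L1 Hs Hsub Hx2 => H.
  move/negP: Ha; apply; apply/c0121P; exists 0, 1, x; split => //; lia.
rewrite F2F1 (sorted_filter leq_trans) // andbT.
apply/negP => /c0121P [a [b [c [H1 H2 Hsub]]]].
have Hdc : subseq [:: c; b] s := subseq_trans (drop_subseq [:: a; b; c; b] 2) Hsub.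
have := sorted_pair (x:=c) (y:=b) leq_trans Hso; rewrite /F1 sub_pair ?Hdc //; lia.
Qed.

Lemma split_first (p : pred nat) s : has p s ->
  exists u e w, [/\ s = u ++ e :: w, p e & all (predC p) u].
Proof.
elim: s => [|x s IH] //=; case: (boolP (p x)) => Hx /=.
  by move=> _; exists [::], x, s.
move=> /IH [u [e [w [-> He Hu]]]]; exists (x :: u), e, w; split => //=.
by rewrite Hx.
Qed.

Lemma pair_cat (x y : nat) t1 t2 : x \in t1 -> y \in t2 -> subseq [:: x; y] (t1 ++ t2).
Proof.
move=> Hx Hy; rewrite -[[:: x; y]]/([:: x] ++ [:: y]); apply: cat_subseq; by rewrite sub1seq.
Qed.

Lemma sorted_last (x : nat) u : sorted leq (x :: u) -> x <= last x u.
Proof.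
elim: u x => [|y u IH] x //= /andP[Hxy H]; exact: leq_trans Hxy (IH y H).
Qed.

Lemma asc_sorted x u : sorted leq (x :: u) -> asc (x :: u) <= last x u - x.
Proof.
elim: u x => [|y u IH] x Hs; first by [].
move: Hs; rewrite [sorted _ _]/= => /andP[Hxy H].
rewrite asc_cons2 [last _ _]/=.
have := IH y H; have := sorted_last H.
move: (asc _) (last y u) => k L H1 H2.
case: (ltnP x y) => Hc /=; lia.
Qed.

Lemma core s c d : is_ascent_seq s -> subseq [:: d; c] s -> 1 < c -> c < d ->
  ~~ subseq [:: c; d; c] s -> exists a b, [/\ a < b, b < c & subseq [:: b; a; d; c] s].
Proof.
move=> Hs Hsub Hc Hcd Hn.
have [s1 [s2 [Es Hc2]]] := subseq_cons_split Hsub.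
rewrite sub1seq in Hc2.
have Hhas : has (fun z => c <= z) (rcons s1 d).
  by apply/hasP; exists d; rewrite ?mem_rcons ?inE ?eqxx // ltnW.
have [u [e [w [Ed He Hu]]]] := split_first Hhas.
have Es' : s = u ++ e :: (w ++ s2) by rewrite Es -cat_rcons Ed -catA.
have Hdin : d \in e :: w.
  have : d \in rcons s1 d by rewrite mem_rcons inE eqxx.
  rewrite Ed mem_cat => /orP[Hdu|//].
  by have := allP Hu d Hdu => /=; rewrite ltnW.
have Hun : u != [::].
  case: u {Ed Hu Hdin} Es' => // Es'; rewrite Es' in Hs.
  by have [s' [E _]] := is_asc_head Hs; move: He; rewrite E; lia.
case: (boolP (sorted leq u)) => Hso.
  exfalso; move/negP: Hn; apply.
  have He' := is_asc_at (v := w ++ s2) (e := e) (u := u); rewrite -Es' in He'.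
  have He2 := He' Hs Hun.
  have Ha := is_asc_prefix (u := u) (v := e :: w ++ s2); rewrite -Es' in Ha.
  have [u' Eu] := is_asc_head (Ha Hs Hun).
  have Hlast : last 0 u' \in u by rewrite Eu mem_last.
  have Hl := allP Hu _ Hlast; rewrite /= -ltnNge in Hl.
  have Has := asc_sorted (x := 0) (u := u'); rewrite -Eu in Has.
  have Has' := Has Hso.
  have Ee : e = c by lia.
  subst e.
  have Hdw : d \in w by move: Hdin; rewrite inE => /orP[/eqP E|//]; lia.
  rewrite Es'; apply: subseq_trans (suffix_subseq u _).
  by rewrite /= eqxx; apply: pair_cat.
have [x [y [Hxy Hr]]] := unsorted_pair Hso.
have Hx : x \in u := mem_subseq Hxy (mem_head _ _).
exists y, x; split.
- by rewrite ltnNge.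
- by have := allP Hu x Hx; rewrite /= -ltnNge.
rewrite Es' -[[:: x; y; d; c]]/([:: x; y] ++ [:: d; c]) -cat_cons; apply: cat_subseq => //.
by apply: pair_cat.
Qed.

Lemma E1 s : is_ascent_seq s ->
  avoids s [:: 0; 1; 2; 1] || avoids s [:: 0; 1; 2; 2] ->
  avoids s [:: 0; 1; 3; 2] = avoids s [:: 1; 0; 3; 2].
Proof.
move=> Hs Hav; apply/idP/idP => Ha.
  rewrite K0132 // in Ha.
  apply/negP => /c1032P [a [b [c [d [H1 H2 H3 Hsub]]]]].
  have Hdc : subseq [:: d; c] s := subseq_trans (drop_subseq [:: b; a; d; c] 2) Hsub.
  have := sorted_pair (x:=d) (y:=c) leq_trans Ha; rewrite /F2 sub_pair ?Hdc //; lia.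
apply/negP => /c0132P [a [b [c [d [H1 H2 H3 Hsub]]]]].
have Hdc : subseq [:: d; c] s := subseq_trans (drop_subseq [:: a; b; d; c] 2) Hsub.
have Hc : 1 < c by lia.
have Hn : ~~ subseq [:: c; d; c] s.
  apply/negP => Hcdc; have := L1 Hs Hcdc Hc => H5.
  case/orP: Hav => /negP; apply.
    apply/c0121P; exists 0, c, d; split; try lia.
    apply: subseq_trans H5.
    have -> : [:: 0; c; d; c] = mask [:: true; false; true; true; true] [:: 0; 1; c; d; c] by [].
    exact: mask_subseq.
  apply/c0122P; exists 0, 1, c; split; try lia.
  apply: subseq_trans H5.
  have -> : [:: 0; 1; c; c] = mask [:: true; true; true; false; true] [:: 0; 1; c; d; c] by [].
  exact: mask_subseq.
have [a' [b' [Ha' Hb' Hs']]] := core Hs Hdc Hc H3 Hn.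
move/negP: Ha; apply; apply/c1032P; exists a', b', c, d; split => //.
Qed.


Ltac crush := repeat match goal with H : context [if _ then _ else _] |- _ => revert H end;
  repeat (match goal with |- context [if ?b then _ else _] => case: (boolP b) end); intros; try lia.

Definition st (t : seq nat) := last 0 (F2 t).
Definition gf h x := if (x == 1) && (1 < h) then h else x.
Definition hf h x := if (1 < x) && (x == h) then 1 else x.

Fixpoint mapst (f : nat -> nat -> nat) (pre s : seq nat) : seq nat :=
  match s with [::] => [::] | x :: s' => f (st pre) x :: mapst f (rcons pre x) s' end.

Definition phi s := mapst gf [::] s.
Definition psi s := mapst hf [::] s.

Lemma mapst_rcons f pre t x : mapst f pre (rcons t x) = rcons (mapst f pre t) (f (st (pre ++ t)) x).
Proof.
elim: t pre => [|y t IH] pre /=; first by rewrite cats0.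
by rewrite IH cat_rcons.
Qed.

Lemma size_mapst f pre s : size (mapst f pre s) = size s.
Proof. by elim: s pre => [|x s IH] pre //=; rewrite IH. Qed.

Lemma st_rcons t x : st (rcons t x) = if 1 < x then x else st t.
Proof. by rewrite /st /F2 filter_rcons; case: ifP => // _; rewrite last_rcons. Qed.

Lemma st_nil : st [::] = 0. Proof. by []. Qed.

Lemma st_cases t : st t = 0 \/ 1 < st t.
Proof.
elim/last_ind: t => [|t x IH]; first by left.
rewrite st_rcons; case: ifP => //; by right.
Qed.

Lemma st_mem t : 1 < st t -> st t \in F1 t.
Proof.
elim/last_ind: t => [|t x IH] //.
rewrite st_rcons /F1 filter_rcons; case: ifP => Hx.
  by move=> _; rewrite ifT ?mem_rcons ?inE ?eqxx //; lia.
move=> /IH H; case: ifP => _ //; by rewrite mem_rcons inE H orbT.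
Qed.

Lemma phi_rcons t x : phi (rcons t x) = rcons (phi t) (gf (st t) x).
Proof. by rewrite /phi mapst_rcons. Qed.

Lemma psi_rcons t x : psi (rcons t x) = rcons (psi t) (hf (st t) x).
Proof. by rewrite /psi mapst_rcons. Qed.

Lemma st_phi t : st (phi t) = st t.
Proof.
elim/last_ind: t => [|t x IH] //.
rewrite phi_rcons !st_rcons IH /gf.
case: (st_cases t) => ->; crush.
Qed.

Lemma st_psi t : st (psi t) = st t.
Proof.
elim/last_ind: t => [|t x IH] //.
rewrite psi_rcons !st_rcons IH /hf.
crush.
Qed.

Lemma sorted_rcons0 (r : rel nat) u x : sorted r (rcons u x) = sorted r u && ((u == [::]) || r (last 0 u) x).
Proof. case: u => [|y u] //=; by rewrite rcons_path. Qed.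

Lemma F1_rcons t x : F1 (rcons t x) = if 0 < x then rcons (F1 t) x else F1 t.
Proof. by rewrite /F1 filter_rcons. Qed.

Lemma F2_rcons t x : F2 (rcons t x) = if 1 < x then rcons (F2 t) x else F2 t.
Proof. by rewrite /F2 filter_rcons. Qed.

Lemma sorted_rcons_all (r : rel nat) u x : transitive r -> sorted r (rcons u x) -> all (fun y => r y x) u.
Proof.
move=> Htr; rewrite sorted_pairwise // -cats1 pairwise_cat => /and3P[H _ _].
by apply/allP => y Hy; have := allP H y Hy => /= /andP[].
Qed.

Lemma asc_rcons' u x : u != [::] -> asc (rcons u x) = asc u + (last 0 u < x).
Proof. by case: u => // y u _; rewrite asc_rcons. Qed.

Lemma condII t x : sorted ltn (F2 (rcons t x)) -> sorted ltn (F2 t) /\ (1 < x -> st t < x).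
Proof.
rewrite F2_rcons; case: ifP => Hx; last by move=> H; split => //; rewrite Hx.
rewrite sorted_rcons0 => /andP[H1 H2]; split => // _.
move: H2; rewrite /st; case: (F2 t) => [|y l] /= H; [lia | exact: H].
Qed.

Lemma condI t x : sorted leq (F1 (rcons t x)) ->
  [/\ sorted leq (F1 t), 1 < x -> st t <= x & x = 1 -> st t < 2].
Proof.
rewrite F1_rcons; case: ifP => Hx.
  move=> H; have Hall := sorted_rcons_all leq_trans H.
  move: H; rewrite sorted_rcons0 => /andP[H1 _]; split => //.
    move=> _; case: (st_cases t) => [->//|Hs].
    exact: (allP Hall _ (st_mem Hs)).
  move=> Ex; subst x; case: (st_cases t) => [->//|Hs].
  by have := allP Hall _ (st_mem Hs) => /=; lia.
by move=> H; split => // H'; lia.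
Qed.

Lemma ar_asc_phi h0 z x : (h0 = 0 \/ 1 < h0) -> (1 < z -> h0 < z) ->
  (1 < x -> (if 1 < z then z else h0) < x) ->
  (gf h0 z < gf (if 1 < z then z else h0) x) = (z < x).
Proof. rewrite /gf => Hh H1 H2; apply/idP/idP; crush. Qed.

Lemma ar_asc_psi h0 z x : (h0 = 0 \/ 1 < h0) -> (1 < z -> h0 <= z) -> (z = 1 -> h0 < 2) ->
  (1 < x -> (if 1 < z then z else h0) <= x) -> (x = 1 -> (if 1 < z then z else h0) < 2) ->
  (hf h0 z < hf (if 1 < z then z else h0) x) = (z < x).
Proof. rewrite /hf => Hh H1 H2 H3 H4; apply/idP/idP; crush. Qed.

Lemma ar_inv_phi h x : (h = 0 \/ 1 < h) -> (1 < x -> h < x) -> hf h (gf h x) = x.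
Proof. rewrite /hf /gf => Hh H; crush. Qed.

Lemma ar_inv_psi h x : (h = 0 \/ 1 < h) -> (1 < x -> h <= x) -> (x = 1 -> h < 2) -> gf h (hf h x) = x.
Proof. rewrite /hf /gf => Hh H1 H2; crush. Qed.

Lemma phi_inv t : last 0 (F1 (phi t)) <= maxn 1 (st t).
Proof.
elim/last_ind: t => [|t x IH] //.
rewrite phi_rcons F1_rcons st_rcons.
have Hc := st_cases t.
case: ifP => Hy; first rewrite last_rcons.
  move: Hy; rewrite /gf; crush.
move: Hy IH; rewrite /gf; crush.
Qed.

Lemma size_phi s : size (phi s) = size s. Proof. exact: size_mapst. Qed.
Lemma size_psi s : size (psi s) = size s. Proof. exact: size_mapst. Qed.

Lemma phi_prop s : is_ascent_seq s -> sorted ltn (F2 s) ->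
  [/\ is_ascent_seq (phi s), asc (phi s) = asc s, sorted leq (F1 (phi s)) & psi (phi s) = s].
Proof.
elim/last_ind: s => [|t x IH] // Hs Hso.
have [Hso' Hx] := condII Hso.
case: (altP (t =P [::])) => [Et|Ht].
  subst t; move: Hs; rewrite is_asc1 => /eqP ->; by [].
move: Hs; rewrite is_asc_rcons // => /andP[Hs' Hbx].
have [H1 H2 H3 H4] := IH Hs' Hso'.
have Hpt : phi t != [::] by rewrite -size_eq0 size_phi size_eq0.
have Hc := st_cases t.
rewrite phi_rcons; split.
- rewrite is_asc_rcons // H1 H2 /=.
  rewrite /gf; case: ifP => // /andP[_ Hst].
  exact: (allP (is_asc_bound Hs') _ (mem_subseq (filter_subseq _ _) (st_mem Hst))).
- rewrite !asc_rcons' // H2; congr (_ + _).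
  clear IH; case/lastP: t Ht Hs' Hso' Hx Hbx H1 H2 H3 H4 Hpt Hc Hso => // t' z _ Hs' Hso' Hx Hbx H1 H2 H3 H4 Hpt Hc Hso.
  rewrite phi_rcons !last_rcons; rewrite st_rcons in Hx *.
  have [_ Hz] := condII Hso'.
  by rewrite ar_asc_phi //; apply: st_cases.
- rewrite F1_rcons; case: ifP => // Hy.
  rewrite sorted_rcons0 H3 /=; apply/orP; right.
  apply: leq_trans (phi_inv t) _.
  move: Hy; rewrite /gf; crush.
- by rewrite psi_rcons st_phi H4 ar_inv_phi.
Qed.

Lemma psi_prop s : is_ascent_seq s -> sorted leq (F1 s) ->
  [/\ is_ascent_seq (psi s), asc (psi s) = asc s, sorted ltn (F2 (psi s)) & phi (psi s) = s].
Proof.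
elim/last_ind: s => [|t x IH] // Hs Hso.
have [Hso' Hx Hx1] := condI Hso.
case: (altP (t =P [::])) => [Et|Ht].
  subst t; move: Hs; rewrite is_asc1 => /eqP ->; by [].
move: Hs; rewrite is_asc_rcons // => /andP[Hs' Hbx].
have [H1 H2 H3 H4] := IH Hs' Hso'.
have Hpt : psi t != [::] by rewrite -size_eq0 size_psi size_eq0.
have Hc := st_cases t.
rewrite psi_rcons; split.
- rewrite is_asc_rcons // H1 H2 /=.
  by rewrite /hf; case: ifP.
- rewrite !asc_rcons' // H2; congr (_ + _).
  clear IH; case/lastP: t Ht Hs' Hso' Hx Hx1 Hbx H1 H2 H3 H4 Hpt Hc Hso => // t' z _ Hs' Hso' Hx Hx1 Hbx H1 H2 H3 H4 Hpt Hc Hso.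
  rewrite psi_rcons !last_rcons; rewrite st_rcons in Hx Hx1 *.
  have [_ Hz Hz1] := condI Hso'.
  by rewrite ar_asc_psi //; apply: st_cases.
- rewrite F2_rcons; case: ifP => // Hy.
  rewrite sorted_rcons0 H3 /=; apply/orP; right.
  have -> : last 0 (F2 (psi t)) = st t by rewrite -(st_psi t).
  move: Hy; rewrite /hf; crush.
- by rewrite phi_rcons st_psi H4 ar_inv_psi.
Qed.


Lemma bij_size (A B : seq (seq nat)) f g : uniq A -> uniq B ->
  {in A, forall s, f s \in B} -> {in B, forall s, g s \in A} ->
  {in A, forall s, g (f s) = s} -> {in B, forall s, f (g s) = s} -> size A = size B.
Proof.
move=> UA UB HfA HgB Hgf Hfg; apply/eqP; rewrite eqn_leq; apply/andP; split.
  rewrite -(size_map f); apply: uniq_leq_size.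
    by rewrite (map_inj_in_uniq (can_in_inj Hgf)).
  by move=> y /mapP [x Hx ->]; apply: HfA.
rewrite -(size_map g); apply: uniq_leq_size.
  by rewrite (map_inj_in_uniq (can_in_inj Hfg)).
by move=> y /mapP [x Hx ->]; apply: HgB.
Qed.

Lemma uniq_Snm n m T : uniq (Snm_set n m T).
Proof. exact/filter_uniq/uniq_all_seqs. Qed.

Lemma memI n m s : (s \in Snm_set n m [:: [:: 0; 1; 2; 1]; [:: 0; 1; 3; 2]]) =
  [&& size s == n, is_ascent_seq s, asc s == m & sorted leq (F1 s)].
Proof.
rewrite mem_filter mem_all_seqs /= andbT.
case: (boolP (is_ascent_seq s)) => Hs; last by rewrite !andbF.
rewrite -K0121 //; case: (boolP (size s == n)) => [/eqP Hn|]; last by rewrite !andbF.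
have -> : all (fun x => x < n) s by rewrite -Hn is_asc_lt_size.
by case: (asc s == m); case: (avoids _ _); case: (avoids _ _).
Qed.

Lemma memII n m s : (s \in Snm_set n m [:: [:: 0; 1; 2; 2]; [:: 0; 1; 3; 2]]) =
  [&& size s == n, is_ascent_seq s, asc s == m & sorted ltn (F2 s)].
Proof.
rewrite mem_filter mem_all_seqs /= andbT.
case: (boolP (is_ascent_seq s)) => Hs; last by rewrite !andbF.
rewrite -K0122 //; case: (boolP (size s == n)) => [/eqP Hn|]; last by rewrite !andbF.
have -> : all (fun x => x < n) s by rewrite -Hn is_asc_lt_size.
by case: (asc s == m); case: (avoids _ _); case: (avoids _ _).
Qed.

Lemma mid n m : Snm n m [:: [:: 0; 1; 2; 1]; [:: 0; 1; 3; 2]] = Snm n m [:: [:: 0; 1; 2; 2]; [:: 0; 1; 3; 2]].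
Proof.
apply: (bij_size (f := psi) (g := phi)); rewrite ?uniq_Snm //.
- move=> s; rewrite memI memII => /and4P[Hn Hs Hm Hso].
  have [A1 A2 A3 A4] := psi_prop Hs Hso.
  by rewrite size_psi Hn A1 A2 Hm A3.
- move=> s; rewrite memI memII => /and4P[Hn Hs Hm Hso].
  have [A1 A2 A3 A4] := phi_prop Hs Hso.
  by rewrite size_phi Hn A1 A2 Hm A3.
- move=> s; rewrite memI => /and4P[Hn Hs Hm Hso].
  by have [A1 A2 A3 A4] := psi_prop Hs Hso.
- move=> s; rewrite memII => /and4P[Hn Hs Hm Hso].
  by have [A1 A2 A3 A4] := phi_prop Hs Hso.
Qed.

Lemma sideA n m : Snm_set n m [:: [:: 0; 1; 2; 1]; [:: 0; 1; 3; 2]] = Snm_set n m [:: [:: 0; 1; 2; 1]; [:: 1; 0; 3; 2]].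
Proof.
apply: eq_in_filter => s _ /=.
case: (boolP (is_ascent_seq s)) => Hs //=.
case: (boolP (avoids s [:: 0; 1; 2; 1])) => Ha; rewrite ?andbF //=.
by rewrite E1 // Ha.
Qed.

Lemma sideB n m : Snm_set n m [:: [:: 0; 1; 2; 2]; [:: 0; 1; 3; 2]] = Snm_set n m [:: [:: 0; 1; 2; 2]; [:: 1; 0; 3; 2]].
Proof.
apply: eq_in_filter => s _ /=.
case: (boolP (is_ascent_seq s)) => Hs //=.
case: (boolP (avoids s [:: 0; 1; 2; 2])) => Ha; rewrite ?andbF //=.
by rewrite E1 // Ha orbT.
Qed.

Theorem proposition2 (n m : nat) :
  1 <= n -> m < n ->
  [/\ Snm n m [:: [:: 0; 1; 2; 1]; [:: 0; 1; 3; 2]] = Snm n m [:: [:: 0; 1; 2; 1]; [:: 1; 0; 3; 2]],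
      Snm n m [:: [:: 0; 1; 2; 1]; [:: 1; 0; 3; 2]] = Snm n m [:: [:: 0; 1; 2; 2]; [:: 0; 1; 3; 2]] &
      Snm n m [:: [:: 0; 1; 2; 2]; [:: 0; 1; 3; 2]] = Snm n m [:: [:: 0; 1; 2; 2]; [:: 1; 0; 3; 2]]].
Proof.
move=> _ _; rewrite /Snm -sideA -sideB; split => //; exact: mid.
Qed.
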